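(* Let $U$ be a $\kappa$-cut with sides $A_1,\dots,A_a$ ($a\ge 2$) and let $W\neq U$ be another $\kappa$-cut with sides $B_1,\dots,B_b$ ($b\ge 2$). Put $T=U\cap W$, $W_i=W\cap A_i$ and $U_j=U\cap B_j$. Then at least one of the following holds. (Laminar type) $W$ is a laminar cut of $U$, and there are indices $i^*,j^*$ with $B_{j^*}\setminus A_{i^*}=(U\setminus W)\cup\bigcup_{i\ne i^*}A_i$ and $A_{i^*}\setminus B_{j^*}=(W\setminus U)\cup\bigcup_{j\neq j^*}B_j$. (Wheel type) $a=b=2$ and $(T;U_1,W_1,U_2,W_2)$ forms a $4$-wheel with sectors $A_1\cap B_1$, $A_1\cap B_2$, $A_2\cap B_2$, $A_2\cap B_1$. (Crossing matching type) $a=b=2$ and, after possibly renaming the two sides of $U$ and/or of $W$, $A_1\cap B_1\ne\emptyset$, $A_2\cap B_2\neq\emptyset$, $A_1\cap B_2=\emptyset$; moreover $|W_2|=|U_1|>0$, $|W_1|=|U_2|>0$, $W$ is a crossing matching cut of $U$ in side $A_1$ with respect to $U_2$, and if in addition $A_2\cap B_1\neq\emptyset$ then $|U_1|\ge|U_2|$. (Small type) $U$ is $(\mathrm{I},\kappa-1)$-small and all small sides of $U$ are contained in $W$, or $W$ is $(\mathrm{I},\kappa-1)$-small and all small sides of $W$ are contained in $U$.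
   Context: Standing conventions: $G=(V,E)$ is a finite, simple, connected, undirected, non-complete graph with $n=|V|$; $\kappa$ is its vertex connectivity (minimum size of a vertex set whose removal disconnects $G$), and it is assumed that $\kappa<n/4$. A cut is a set $U\subset V$ such that the subgraph induced on $V\setminus U$ is disconnected; a $\kappa$-cut is a cut with exactly $\kappa$ vertices. A side of a cut $U$ is (the vertex set of) a connected component of the subgraph induced on $V\setminus U$. A set $S$ disconnects $P$ from the rest of the graph if $P\neq\emptyset$, $P\cap S=\emptyset$, $V\setminus(S\cup P)\ne\emptyset$ and every path from $P$ to $V\setminus(S\cup P)$ meets $S$. Laminar cut: if $U$ is a cut and $P$ a side of $U$, a cut $W$ with $W\subseteq U\cup P$ is a laminar cut of $U$ in side $P$; a laminar cut of $U$ is a laminar cut of $U$ in some side. Small cuts: a cut $U$ with sides $A_1,\dots,A_a$ is $(\mathrm{I},t)$-small if there is an index $i^\sharp$ with $\sum_{i\neq i^\sharp}|A_i|\le t$; then $A_{i^\sharp}$ is its large side and the other sides are its small sides. Wheels: for $w\ge4$ (indices taken modulo $w$), if $V$ is partitioned into pairwise disjoint sets $T,C_1,\dots,C_w,S_1,\dots,S_w$ with all $C_i,S_i$ nonempty ($T$ may be empty) such that for every $i$ the set $C_i\cup T\cup C_{i+2}$ is a $\kappa$-cut that disconnects $S_i\cup C_{i+1}\cup S_{i+1}$ from the rest of the graph, then $(T;C_1,\dots,C_w)$ forms a $w$-wheel with sectors $S_1,\dots,S_w$. Matching cuts: let $U$ be a cut, $A$ a side of $U$, $P\subseteq U$. A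 $\kappa$-cut $W$ is a matching cut of $U$ in side $A$ with respect to $P$ if (i) $U\setminus P\subseteq W\subseteq U\cup A$, (ii) $A\setminus W\neq\emptyset$, and (iii) $W$ disconnects $P\cup(V\setminus(U\cup A))$ from $A\setminus W$ (i.e., these sets are disjoint from $W$ and every path between them meets $W$). If $U$ has exactly two sides $A,B$ and $\emptyset\neq P\subseteq U$, a $\kappa$-cut $W$ is a crossing matching cut of $U$ in side $A$ with respect to $P$ if (i) $W\cap B\neq\emptyset$ and (ii) $(U\setminus P)\cup(W\cap A)$ is a matching cut of $U$ in side $A$ with respect to $P$. *)

(* Defs.v *)
(* A graph is a symmetric irreflexive relation e on a finType V. *)
From mathcomp Require Import all_boot.
Set Implicit Arguments. Unset Strict Implicit. Unset Printing Implicit Defensive.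

Section Defs.
Variable V : finType.
Variable e : rel V.

Definition avoid (S : {set V}) : rel V :=
  [rel x y | [&& e x y, x \notin S & y \notin S]].

Definition graph_connected : Prop := forall x y, connect e x y.
Definition non_complete : Prop := exists x y, x != y /\ ~~ e x y.

Definition is_cut (U : {set V}) : bool :=
  [exists x, exists y, [&& x \notin U, y \notin U & ~~ connect (avoid U) x y]].

Definition vertex_connectivity (k : nat) : Prop :=
  (exists U, is_cut U /\ #|U| = k) /\ (forall U, is_cut U -> k <= #|U|).

Definition kcut (k : nat) (U : {set V}) : bool := is_cut U && (#|U| == k).

(* A is a side of U: a connected component of the subgraph induced on V \ U *)
Definition is_side (U A : {set V}) : bool :=
  (A != set0) &&
  [forall x in A, A == [set y | (y \notin U) && connect (avoid U) x y]].

Definition sides (U : {set V}) : {set {set V}} := [set A | is_side U A].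

(* A : nat -> {set V} enumerates (indices 0..a-1) the sides of U without repetition *)
Definition enum_sides (U : {set V}) (a : nat) (A : nat -> {set V}) : Prop :=
  [/\ (forall i, i < a -> A i \in sides U),
      (forall X, X \in sides U -> exists2 i, i < a & A i = X) &
      (forall i j, i < a -> j < a -> A i = A j -> i = j)].

Definition disconnects (S P : {set V}) : Prop :=
  [/\ P != set0, [disjoint P & S], ~: (S :|: P) != set0 &
      forall x y, x \in P -> y \in ~: (S :|: P) -> ~~ connect (avoid S) x y].

Definition separates (S X Y : {set V}) : Prop :=
  [/\ [disjoint X & S], [disjoint Y & S] &
      forall x y, x \in X -> y \in Y -> ~~ connect (avoid S) x y].

Definition laminar_cut (U W : {set V}) : Prop :=
  is_cut W /\ exists2 P, P \in sides U & W \subset U :|: P.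

Definition small_with_large (t : nat) (U L : {set V}) : Prop :=
  is_cut U /\ L \in sides U /\ \sum_(X in sides U | X != L) #|X| <= t.

(* w-wheel (T; C_0,...,C_{w-1}) with sectors S_0,...,S_{w-1}; indices mod w *)
Definition forms_wheel (k w : nat) (T : {set V}) (C S : nat -> {set V}) : Prop :=
  4 <= w /\
  (forall i, i < w -> C i != set0 /\ S i != set0) /\
  (forall i j, i < w -> j < w -> i != j ->
      [disjoint C i & C j] /\ [disjoint S i & S j]) /\
  (forall i j, i < w -> j < w -> [disjoint C i & S j]) /\
  (forall i, i < w -> [disjoint T & C i] /\ [disjoint T & S i]) /\
  T :|: \bigcup_(i < w) (C i :|: S i) = setT /\
  (forall i, i < w ->
    kcut k (C i :|: T :|: C ((i + 2) %% w)) /\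
    disconnects (C i :|: T :|: C ((i + 2) %% w))
                (S i :|: C ((i + 1) %% w) :|: S ((i + 1) %% w))).

Definition matching_cut (k : nat) (U A P W : {set V}) : Prop :=
  [/\ kcut k W, U :\: P \subset W, W \subset U :|: A, A :\: W != set0 &
      separates W (P :|: ~: (U :|: A)) (A :\: W)].

Definition crossing_matching_cut (k : nat) (U A P W : {set V}) : Prop :=
  [/\ #|sides U| = 2, A \in sides U, P != set0, P \subset U &
      kcut k W] /\
  exists B, [/\ B \in sides U, B != A, W :&: B != set0 &
                matching_cut k U A P ((U :\: P) :|: (W :&: A))].

End Defs.

(* Main.v *)
Require Import Defs.
From mathcomp Require Import all_boot.
From mathcomp Require Import zify.
Set Implicit Arguments. Unset Strict Implicit. Unset Printing Implicit Defensive.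

Ltac bcase := repeat match goal with |- context [in_mem ?z (mem ?S)] => case: (in_mem z (mem S)) end.
Ltac bclose := simpl; intros; try discriminate; try reflexivity.
Ltac bsolve z :=
  let T := type of z in
  repeat match goal with H : forall _ : T, is_true _ |- _ => move: (H z); clear H end;
  rewrite ?inE; bcase; bclose.

Section Basic.
Variables (V : finType) (e : rel V).
Hypothesis esym : symmetric e.

Definition comp (S : {set V}) (x : V) :=
  [set y | (y \notin S) && connect (avoid e S) x y].

Lemma avoid_sym (S : {set V}) : symmetric (avoid e S).
Proof. by move=> x y; rewrite /avoid /= esym [(x \notin S) && _]andbC. Qed.

Lemma conn_rev (S : {set V}) (x y : V) : connect (avoid e S) x y -> connect (avoid e S) y x.
Proof.
move=> /connectP[p pth ->] {y}; elim: p x pth => [|z p IH] x /=; first by rewrite connect0.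
case/andP=> axz pth; apply: connect_trans (IH z pth) _.
by apply: connect1; rewrite avoid_sym.
Qed.

Lemma conn_sym (S : {set V}) (x y : V) : connect (avoid e S) x y = connect (avoid e S) y x.
Proof. by apply/idP/idP; apply: conn_rev. Qed.

Lemma conn_closed (P S : {set V}) (x y : V) :
  (forall u v, u \in P -> avoid e S u v -> v \in P) -> x \in P ->
  connect (avoid e S) x y -> y \in P.
Proof.
move=> cl xP /connectP[p pth ->] {y}; elim: p x pth xP => [|z p IH] x //=.
case/andP=> axz pth xP; apply: IH pth _; exact: cl xP axz.
Qed.

Lemma notin_conn (S : {set V}) (x y : V) : x \notin S -> connect (avoid e S) x y -> y \notin S.
Proof.
move=> xS cxy; have: y \in ~: S.
  apply: (conn_closed (P := ~: S)) cxy; last by rewrite inE.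
  by move=> u v _ /and3P[_ _ vS]; rewrite inE.
by rewrite inE.
Qed.

Lemma sideE (U X : {set V}) : is_side e U X -> forall x, x \in X -> X = comp U x.
Proof. by case/andP=> _ /forallP H x xX; apply/eqP; move: (H x); rewrite xX. Qed.

Lemma side_notin (U X : {set V}) (x : V) : is_side e U X -> x \in X -> x \notin U.
Proof. by move=> sX xX; move: (xX); rewrite {1}(sideE sX xX) inE => /andP[]. Qed.

Lemma side_conn (U X : {set V}) (x y : V) : is_side e U X -> x \in X -> y \in X -> connect (avoid e U) x y.
Proof. by move=> sX xX; rewrite {1}(sideE sX xX) inE => /andP[]. Qed.

Lemma side_closed (U X : {set V}) (x y : V) : is_side e U X -> x \in X -> e x y -> y \notin U -> y \in X.
Proof.
move=> sX xX exy yU; rewrite (sideE sX xX) inE yU /=; apply: connect1.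
by rewrite /avoid /= exy yU (side_notin sX xX).
Qed.

Lemma mem_comp (U : {set V}) (x : V) : x \notin U -> x \in comp U x.
Proof. by move=> xU; rewrite inE xU connect0. Qed.

Lemma comp_side (U : {set V}) (x : V) : x \notin U -> is_side e U (comp U x).
Proof.
move=> xU; apply/andP; split; first by apply/set0Pn; exists x; exact: mem_comp.
apply/forallP=> y; apply/implyP; rewrite inE => /andP[yU cxy].
apply/eqP/setP=> z; rewrite !inE; case: (z \notin U) => //=.
apply/idP/idP => h; first exact: connect_trans (conn_rev cxy) h.
exact: connect_trans cxy h.
Qed.

Lemma side_of (U : {set V}) (x : V) : x \notin U -> exists2 X, is_side e U X & x \in X.
Proof. by move=> xU; exists (comp U x); [exact: comp_side | exact: mem_comp]. Qed.

Lemma sides_disj (U X Y : {set V}) (z : V) : is_side e U X -> is_side e U Y -> X != Y -> z \in X -> z \notin Y.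
Proof.
move=> sX sY neq zX; apply/negP => zY.
by rewrite (sideE sX zX) (sideE sY zY) eqxx in neq.
Qed.

Lemma conn_transfer (S S' : {set V}) (x y : V) :
  (forall z, connect (avoid e S) x z -> z \notin S') ->
  connect (avoid e S) x y -> connect (avoid e S') x y.
Proof.
move=> H /connectP[p pth ->] {y}; elim: p x pth H => [|z p IH] x /=; first by rewrite connect0.
case/andP=> axz pth H; have axz' := axz; move: axz' => /and3P[exz _ _].
apply: (connect_trans (y := z)).
  by apply: connect1; rewrite /avoid /= exz (H x (connect0 _ _)) (H z (connect1 axz)).
apply: IH pth _ => w cw; apply: H; exact: connect_trans (connect1 axz) cw.
Qed.

Lemma cutP (S P : {set V}) (x y : V) :
  (forall u v, u \in P -> avoid e S u v -> v \in P) -> x \in P -> x \notin S ->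
  y \notin S -> y \notin P -> is_cut e S.
Proof.
move=> cl xP xS yS yP; apply/existsP; exists x; apply/existsP; exists y.
rewrite xS yS /=; apply/negP => cxy.
by rewrite (conn_closed cl xP cxy) in yP.
Qed.

Lemma card_disjU (A B : {set V}) : (forall z, z \in A -> z \notin B) ->
  #|A :|: B| = #|A| + #|B|.
Proof.
move=> H; rewrite cardsU; have -> : A :&: B = set0.
  apply/setP=> z; rewrite !inE; case: (boolP (z \in A)) => // zA.
  by rewrite (negbTE (H z zA)).
by rewrite cards0 subn0.
Qed.

Lemma disjP' (A B : {set V}) : (forall z, (z \in A) && (z \in B) = false) -> [disjoint A & B].
Proof. by move=> H; rewrite -setI_eq0; apply/eqP/setP=> z; rewrite !inE H. Qed.



End Basic.


Section Cuts.
Variables (V : finType) (e : rel V) (k : nat).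
Hypothesis esym : symmetric e.
Hypothesis mincut : forall S : {set V}, is_cut e S -> k <= #|S|.

Lemma nbr (U X : {set V}) (u : V) : #|U| = k -> is_cut e U -> is_side e U X -> u \in U ->
  exists2 x, x \in X & e u x.
Proof.
move=> cU ctU sX uU.
case: (boolP [exists x in X, e u x]) => [/existsP[x /andP[xX exu]] | H]; first by exists x.
exfalso.
have [y yU yX] : exists2 y, y \notin U & y \notin X.
  case/existsP: ctU => x1 /existsP[y1 /and3P[x1U y1U ncon]].
  case: (boolP (x1 \in X)) => x1X; last by exists x1.
  case: (boolP (y1 \in X)) => y1X; last by exists y1.
  by rewrite (side_conn sX x1X y1X) in ncon.
have [x0 x0X] : exists x0, x0 \in X by case/andP: sX => /set0Pn.
have ct : is_cut e (U :\ u).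
  apply: (cutP (P := X) (x := x0) (y := y)) => //.
  - move=> v w vX /and3P[evw _ wU]; rewrite in_setD1 negb_and negbK in wU.
    case/orP: wU => [/eqP wu | wU]; last exact: side_closed sX vX evw wU.
    subst w; move/negP: H; case; apply/existsP; exists v; rewrite vX /=.
    by rewrite esym.
  - by rewrite in_setD1 (negbTE (side_notin sX x0X)) andbF.
  - by rewrite in_setD1 (negbTE yU) andbF.
have := mincut ct; have := cardsD1 u U; rewrite uU cU; lia.
Qed.

Definition cornerS (U W X Y : {set V}) := (W :&: X) :|: (U :&: W) :|: (U :&: Y).

Lemma corner_closed (U W X Y : {set V}) (u v : V) : is_side e U X -> is_side e W Y ->
  u \in X :&: Y -> avoid e (cornerS U W X Y) u v -> v \in X :&: Y.
Proof.
move=> sX sY /setIP[uX uY] /and3P[euv _ vS]; rewrite /cornerS !inE in vS.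
case: (boolP (v \in U)) => vU.
  case: (boolP (v \in W)) => vW; first by move: vS; rewrite vU vW; case: (v \in X).
  have vY := side_closed sY uY euv vW.
  by move: vS; rewrite vU vY; case: (v \in X); case: (v \in W).
have vX := side_closed sX uX euv vU.
case: (boolP (v \in W)) => vW; first by move: vS; rewrite vX vW.
by rewrite inE vX (side_closed sY uY euv vW).
Qed.

Lemma corner_out (U W X Y : {set V}) (z : V) : z \notin U -> z \notin W ->
  z \notin cornerS U W X Y.
Proof. by move=> zU zW; rewrite /cornerS !inE (negbTE zU) (negbTE zW). Qed.

Lemma corner_cut (U W X Y : {set V}) (x z : V) : is_side e U X -> is_side e W Y ->
  x \in X :&: Y -> z \notin cornerS U W X Y -> z \notin X :&: Y ->
  is_cut e (cornerS U W X Y).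
Proof.
move=> sX sY xXY zS zXY; apply: (cutP (P := X :&: Y) (x := x) (y := z)) => //.
- by move=> u v; apply: corner_closed.
- move: xXY => /setIP[xX xY].
  exact: corner_out (side_notin sX xX) (side_notin sY xY).
Qed.

Lemma corner_bound (U W X Y : {set V}) (x z : V) : is_side e U X -> is_side e W Y ->
  x \in X :&: Y -> z \notin cornerS U W X Y -> z \notin X :&: Y ->
  k <= #|W :&: X| + #|U :&: W| + #|U :&: Y|.
Proof.
move=> sX sY xXY zS zXY; have := mincut (corner_cut sX sY xXY zS zXY).
rewrite /cornerS; have := cardsUI (W :&: X :|: U :&: W) (U :&: Y).
have := cardsUI (W :&: X) (U :&: W); lia.
Qed.

Lemma G3 (U W X Y : {set V}) (u : V) : #|U| = k -> is_cut e U -> is_side e U X ->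
  (forall z, z \in X -> z \notin W) -> is_side e W Y -> u \in U -> u \notin W -> u \in Y ->
  exists x, x \in X :&: Y.
Proof.
move=> cU ctU sX dX sY uU uW uY; have [x xX eux] := nbr cU ctU sX uU.
by exists x; rewrite inE xX (side_closed sY uY eux (dX x xX)).
Qed.

Lemma G1 (U W X Y : {set V}) (x : V) : is_side e U X ->
  (forall z, z \in X -> z \notin W) -> is_side e W Y -> x \in X -> x \in Y -> X \subset Y.
Proof.
move=> sX dX sY xX xY; apply/subsetP => z zX.
have cxz := side_conn sX xX zX.
have xU := side_notin sX xX.
have c' : connect (avoid e W) x z.
  apply: conn_transfer cxz => w cw; apply: dX.
  by rewrite (sideE sX xX) inE (notin_conn xU cw) cw.
by rewrite (sideE sY xY) inE (dX z zX) c'.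
Qed.

Lemma G2 (U W X Y : {set V}) (u : V) : #|U| = k -> is_cut e U -> is_side e U X ->
  (forall z, z \in X -> z \notin W) -> X \subset Y -> is_side e W Y ->
  u \in U -> u \notin W -> u \in Y.
Proof.
move=> cU ctU sX dX XY sY uU uW; have [x xX eux] := nbr cU ctU sX uU.
apply: (side_closed sY (subsetP XY x xX)) uW; by rewrite esym.
Qed.

End Cuts.


Section Lam.
Variables (V : finType) (e : rel V) (k : nat).
Hypothesis esy : symmetric e.
Hypothesis mincut : forall S : {set V}, is_cut e S -> k <= #|S|.

Lemma lam_core (U W : {set V}) (a b : nat) (A B : nat -> {set V}) (i0 : nat) :
  #|U| = k -> is_cut e U -> #|W| = k -> W != U -> 2 <= a ->
  enum_sides e U a A -> enum_sides e W b B -> i0 < a -> W \subset U :|: A i0 ->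
  exists2 j0, j0 < b &
    (B j0 :\: A i0 = (U :\: W) :|: \bigcup_(i < a | val i != i0) A i) /\
    (A i0 :\: B j0 = (W :\: U) :|: \bigcup_(j < b | val j != j0) B j).
Proof.
move=> cU ctU cW nWU a2 [Asd Asur Ainj] [Bsd Bsur Binj] i0a sub.
have [u uU uW] : exists2 u, u \in U & u \notin W.
  case: (boolP (U \subset W)) => [sUW | /subsetPn[u0 u0U u0W]]; last by exists u0.
  have : U == W by rewrite eqEcard sUW cW cU leqnn.
  by rewrite eq_sym (negbTE nWU).
have [Y sY uY] := side_of esy uW.
have [j0 j0b Yj0] := Bsur Y ltac:(by rewrite inE).
rewrite -Yj0 in sY uY.
have sAi0 : is_side e U (A i0) by have := Asd i0 i0a; rewrite inE.
have disjW : forall X, is_side e U X -> X != A i0 -> forall z, z \in X -> z \notin W.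
  move=> X sX neq z zX; apply/negP=> zW; have := subsetP sub z zW.
  rewrite inE (negbTE (side_notin sX zX)) /= => zA.
  by rewrite (negbTE (sides_disj sX sAi0 neq zX)) in zA.
have subB : forall X, is_side e U X -> X != A i0 -> X \subset B j0.
  move=> X sX neq.
  have [x /setIP[xX xB]] := G3 esy mincut cU ctU sX (disjW X sX neq) sY uU uW uY.
  exact: G1 sX (disjW X sX neq) sY xX xB.
have [i1 i1a ne1] : exists2 i1, i1 < a & A i1 != A i0.
  case: (boolP (A 0 == A i0)) => h; last by exists 0 => //; lia.
  exists 1 => //; apply/negP => /eqP h1.
  by have := Ainj 0 1 ltac:(lia) a2 (etrans (eqP h) (Logic.eq_sym h1)).
have sA1 : is_side e U (A i1) by have := Asd i1 i1a; rewrite inE.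
have UWB : forall u', u' \in U -> u' \notin W -> u' \in B j0.
  move=> u' u'U u'W.
  have := G2 esy mincut cU ctU sA1 (disjW _ sA1 ne1) (subB _ sA1 ne1) sY u'U u'W.
  exact.
have Aidx : forall i : 'I_a, val i != i0 -> is_side e U (A i) /\ A i != A i0.
  move=> i ne; split; first by have := Asd i (ltn_ord i); rewrite inE.
  apply/negP=> /eqP h; move/eqP: ne; apply; exact: Ainj _ _ (ltn_ord i) i0a h.
have Bidx : forall j : 'I_b, val j != j0 -> is_side e W (B j) /\ B j != B j0.
  move=> j ne; split; first by have := Bsd j (ltn_ord j); rewrite inE.
  apply/negP=> /eqP h; move/eqP: ne; apply; exact: Binj _ _ (ltn_ord j) j0b h.
exists j0 => //; split; apply/setP => z; rewrite !inE; apply/idP/idP.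
- case/andP=> zA zB; have zW := side_notin sY zB.
  case: (boolP (z \in U)) => zU; first by apply/orP; left; apply/andP.
  apply/orP; right; have [X sX zX] := side_of esy zU.
  have [i ia Ai] := Asur X ltac:(by rewrite inE).
  apply/bigcupP; exists (Ordinal ia) => /=; last by rewrite Ai.
  by apply/negP => /eqP ei; rewrite -ei Ai zX in zA.
- case/orP => [/andP[zW zU] | /bigcupP[i ne zi]].
    rewrite (UWB z zU zW) andbT; apply/negP => zA.
    by move: (side_notin sAi0 zA); rewrite zU.
  have [sAi neq] := Aidx i ne.
  rewrite (subsetP (subB _ sAi neq) z zi) andbT.
  exact: sides_disj sAi sAi0 neq zi.
- case/andP=> zB zA; have zU := side_notin sAi0 zA.
  case: (boolP (z \in W)) => zW; first by apply/orP; left; apply/andP.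
  apply/orP; right; have [Y' sY' zY'] := side_of esy zW.
  have [j jb Bj] := Bsur Y' ltac:(by rewrite inE).
  apply/bigcupP; exists (Ordinal jb) => /=; last by rewrite Bj.
  by apply/negP => /eqP ej; rewrite -ej Bj zY' in zB.
- case/orP => [/andP[zU zW] | /bigcupP[j ne zj]].
    apply/andP; split; first by apply/negP => zB; move: (side_notin sY zB); rewrite zW.
    by have := subsetP sub z zW; rewrite inE (negbTE zU).
  have [sBj neq] := Bidx j ne.
  have zW := side_notin sBj zj.
  have zB0 := sides_disj sBj sY neq zj.
  rewrite zB0 /=.
  have zU : z \notin U by apply/negP => zU; rewrite (UWB z zU zW) in zB0.
  have [X sX zX] := side_of esy zU.
  case: (boolP (X == A i0)) => [/eqP <- //| neq'].
  by rewrite (subsetP (subB _ sX neq') z zX) in zB0.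
Qed.
End Lam.


Section More.
Variables (V : finType) (e : rel V) (k : nat).
Hypothesis esy : symmetric e.
Hypothesis mincut : forall S : {set V}, is_cut e S -> k <= #|S|.

Lemma meets (U W : {set V}) : #|U| = k -> is_cut e U ->
  ~~ [exists Y, is_side e W Y && (U \subset W :|: Y)] ->
  forall X, is_side e U X -> exists z, z \in W :&: X.
Proof.
move=> cU ctU nl X sX.
case: (boolP [exists z, z \in W :&: X]) => [/existsP // | none]; exfalso.
have dX : forall z, z \in X -> z \notin W.
  move=> z zX; apply/negP => zW; move/negP: none; apply; apply/existsP; exists z.
  by rewrite inE zW zX.
have [x xX] : exists x, x \in X by case/andP: sX => /set0Pn.
have [Y sY xY] := side_of esy (dX x xX).
have XY := G1 sX dX sY xX xY.
move/negP: nl; apply; apply/existsP; exists Y; rewrite sY /=.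
apply/subsetP => u uU; rewrite inE; case: (boolP (u \in W)) => //= uW.
by have := G2 esy mincut cU ctU sX dX XY sY uU uW.
Qed.

Lemma small_row (U W X0 : {set V}) : #|W| = k -> is_cut e U -> is_side e U X0 ->
  (exists z, z \in W :&: X0) -> (forall X, is_side e U X -> X != X0 -> X \subset W) ->
  small_with_large e k.-1 U X0 /\ (forall X, X \in sides e U -> X != X0 -> X \subset W).
Proof.
move=> cW ctU sX0 [w wWX] H; split; last by move=> X; rewrite inE; apply: H.
split=> //; split; first by rewrite inE.
set P := [set X in sides e U | X != X0].
have triv : trivIset P.
  apply/trivIsetP => X Y; rewrite !inE => /andP[sX _] /andP[sY _] neq.
  rewrite -setI_eq0; apply/eqP/setP => z; rewrite !inE.
  case: (boolP (z \in X)) => zX //=; by rewrite (negbTE (sides_disj sX sY neq zX)).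
have -> : \sum_(X in sides e U | X != X0) #|X| = \sum_(X in P) #|X|.
  by apply: eq_bigl => X /=; rewrite !inE.
rewrite (eqP triv).
have cov : cover P \subset W :\: X0.
  apply/subsetP => z /bigcupP[X]; rewrite !inE => /andP[sX ne] zX.
  rewrite (subsetP (H X sX ne) z zX) andbT.
  exact: sides_disj sX sX0 ne zX.
have := subset_leq_card cov; have := cardsID X0 W.
have : 0 < #|W :&: X0| by apply/card_gt0P; exists w.
lia.
Qed.

Definition no_opp (U W : {set V}) := forall X X' Y Y' : {set V},
  is_side e U X -> is_side e U X' -> is_side e W Y -> is_side e W Y' ->
  X != X' -> Y != Y' -> (exists z, z \in X :&: Y) -> forall z, z \in X' :&: Y' -> False.

Lemma no_opp_small (U W X00 : {set V}) : #|U| = k -> is_cut e U -> #|W| = k -> is_cut e W ->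
  is_side e U X00 ->
  (forall X, is_side e U X -> exists z, z \in W :&: X) ->
  (forall Y, is_side e W Y -> exists z, z \in U :&: Y) ->
  no_opp U W ->
  (exists L, small_with_large e k.-1 U L /\
      forall X, X \in sides e U -> X != L -> X \subset W) \/
  (exists L, small_with_large e k.-1 W L /\
      forall X, X \in sides e W -> X != L -> X \subset U).
Proof.
move=> cU ctU cW ctW sX00 hX hY nop.
case: (boolP [exists X, exists Y, [&& is_side e U X, is_side e W Y & X :&: Y != set0]])
  => [/existsP[X0 /existsP[Y0 /and3P[sX0 sY0 /set0Pn[z0 z0in]]]] | none].
  case: (boolP [exists X, exists Y, [&& is_side e U X, is_side e W Y, X != X0 & X :&: Y != set0]])
    => [/existsP[X1 /existsP[Y1 /and4P[sX1 sY1 n10 /set0Pn[z1 z1in]]]] | none2].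
    have eY : Y1 = Y0.
      apply/eqP; apply/negPn/negP => nY.
      by refine (nop X0 X1 Y0 Y1 sX0 sX1 sY0 sY1 _ _ _ z1 z1in); [rewrite eq_sym | rewrite eq_sym | exists z0].
    subst Y1; right; exists Y0; apply: small_row => //; first exact: hY.
    move=> Y sY nY; apply/subsetP => z zY; apply/negPn/negP => zU.
    have [X sX zX] := side_of esy zU.
    case: (boolP (X == X0)) => [/eqP eX | nX].
      subst X; refine (nop X1 X0 Y0 Y sX1 sX0 sY0 sY n10 _ _ z _).
      - by rewrite eq_sym.
      - by exists z1.
      - by rewrite inE zX zY.
    refine (nop X0 X Y0 Y sX0 sX sY0 sY _ _ _ z _).
    - by rewrite eq_sym.
    - by rewrite eq_sym.
    - by exists z0.
    - by rewrite inE zX zY.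
  left; exists X0; apply: small_row => //; first exact: hX.
  move=> X sX nX; apply/subsetP => z zX; apply/negPn/negP => zW.
  have [Y sY zY] := side_of esy zW.
  move/negP: none2; apply; apply/existsP; exists X; apply/existsP; exists Y.
  rewrite sX sY nX /=; apply/set0Pn; exists z; by rewrite inE zX zY.
left; exists X00; apply: small_row => //; first exact: hX.
move=> X sX nX; apply/subsetP => z zX; apply/negPn/negP => zW.
have [Y sY zY] := side_of esy zW.
move/negP: none; apply; apply/existsP; exists X; apply/existsP; exists Y.
rewrite sX sY /=; apply/set0Pn; exists z; by rewrite inE zX zY.
Qed.

Lemma opp_third (U W X X' X'' Y Y' : {set V}) : #|U| = k -> #|W| = k ->
  is_side e U X -> is_side e U X' -> is_side e U X'' -> X != X' -> X'' != X -> X'' != X' ->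
  is_side e W Y -> is_side e W Y' -> Y != Y' ->
  (exists z, z \in X :&: Y) -> (exists z, z \in X' :&: Y') -> (exists z, z \in W :&: X'') -> False.
Proof.
move=> cU cW sX sX' sX'' n1 n2 n3 sY sY' nY [x xin] [x' x'in] [w win].
have hx := x'in; move: hx => /setIP[x'X' x'Y'].
have hx := xin; move: hx => /setIP[xX xY].
have x'X : x' \notin X :&: Y.
  by rewrite inE (negbTE (sides_disj sX' sX _ x'X')) // eq_sym.
have xX' : x \notin X' :&: Y'.
  by rewrite inE (negbTE (sides_disj sX sX' n1 xX)).
have h1 := corner_bound mincut sX sY xin (corner_out X Y (side_notin sX' x'X') (side_notin sY' x'Y')) x'X.
have h2 := corner_bound mincut sX' sY' x'in (corner_out X' Y' (side_notin sX xX) (side_notin sY xY)) xX'.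
have f1 : forall z, (z \in X) ==> (z \notin U) by move=> z; apply/implyP; exact: side_notin sX.
have f2 : forall z, (z \in X') ==> (z \notin U) by move=> z; apply/implyP; exact: side_notin sX'.
have f3 : forall z, (z \in X'') ==> (z \notin U) by move=> z; apply/implyP; exact: side_notin sX''.
have f4 : forall z, (z \in X) ==> (z \notin X') by move=> z; apply/implyP; exact: sides_disj sX sX' n1.
have f5 : forall z, (z \in X'') ==> (z \notin X) by move=> z; apply/implyP; exact: sides_disj sX'' sX n2.
have f6 : forall z, (z \in X'') ==> (z \notin X') by move=> z; apply/implyP; exact: sides_disj sX'' sX' n3.
have g1 : forall z, (z \in Y) ==> (z \notin W) by move=> z; apply/implyP; exact: side_notin sY.
have g2 : forall z, (z \in Y') ==> (z \notin W) by move=> z; apply/implyP; exact: side_notin sY'.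
have g3 : forall z, (z \in Y) ==> (z \notin Y') by move=> z; apply/implyP; exact: sides_disj sY sY' nY.
have d1 : forall z, z \in (U :&: W) :|: (W :&: X) :|: (W :&: X') -> z \notin W :&: X''.
  by move=> z; bsolve z.
have d2 : forall z, z \in (U :&: W) :|: (W :&: X) -> z \notin W :&: X'.
  by move=> z; bsolve z.
have d3 : forall z, z \in (U :&: W) -> z \notin W :&: X.
  by move=> z; bsolve z.
have sW : (U :&: W) :|: (W :&: X) :|: (W :&: X') :|: (W :&: X'') \subset W.
  by apply/subsetP => z; bsolve z.
have d4 : forall z, z \in (U :&: W) :|: (U :&: Y) -> z \notin U :&: Y'.
  by move=> z; bsolve z.
have d5 : forall z, z \in (U :&: W) -> z \notin U :&: Y.
  by move=> z; bsolve z.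
have sU : (U :&: W) :|: (U :&: Y) :|: (U :&: Y') \subset U.
  by apply/subsetP => z; bsolve z.
have hw := subset_leq_card sW. rewrite (card_disjU d1) (card_disjU d2) (card_disjU d3) in hw.
have hu := subset_leq_card sU. rewrite (card_disjU d4) (card_disjU d5) in hu.
have hp : 0 < #|W :&: X''| by apply/card_gt0P; exists w.
clear -hw hu hp h1 h2 cU cW.
lia.
Qed.

End More.


Section Final.
Variables (V : finType) (e : rel V) (k : nat).
Hypothesis esy : symmetric e.
Hypothesis mincut : forall S : {set V}, is_cut e S -> k <= #|S|.

Lemma two_facts (U X0 X1 : {set V}) : is_side e U X0 -> is_side e U X1 -> X0 != X1 ->
  (forall X, is_side e U X -> X = X0 \/ X = X1) ->
  [/\ forall z, (z \in X0) ==> (z \notin U), forall z, (z \in X1) ==> (z \notin U),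
      forall z, ~~ ((z \in X0) && (z \in X1)) & forall z, [|| z \in U, z \in X0 | z \in X1]].
Proof.
move=> s0 s1 n01 hX; split=> z.
- by apply/implyP; exact: side_notin s0.
- by apply/implyP; exact: side_notin s1.
- apply/negP => /andP[a b]; by move: (sides_disj s0 s1 n01 a); rewrite b.
- case: (boolP (z \in U)) => //= zU; have [X sX zX] := side_of esy zU.
  by case: (hX X sX) => eX; rewrite -eX zX ?orbT.
Qed.

Lemma third (U : {set V}) a (A : nat -> {set V}) : enum_sides e U a A -> 2 < a ->
  forall X X' : {set V}, exists2 X'', is_side e U X'' & X'' != X /\ X'' != X'.
Proof.
case=> sd _ inj a3 X X'.
have ne : forall i j, i < a -> j < a -> i != j -> A i != A j.
  by move=> i j ia ja nij; apply/negP => /eqP h; move/eqP: nij; apply; exact: inj.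
have s : forall i, i < a -> is_side e U (A i) by move=> i ia; have := sd i ia; rewrite inE.
case: (boolP (A 0 \in [set X; X'])) => h0; last first.
  exists (A 0); first by apply: s; lia.
  by move: h0; rewrite !inE negb_or => /andP[].
case: (boolP (A 1 \in [set X; X'])) => h1; last first.
  exists (A 1); first by apply: s; lia.
  by move: h1; rewrite !inE negb_or => /andP[].
exists (A 2); first by apply: s.
have n01 := ne 0 1 ltac:(lia) ltac:(lia) isT.
have n02 := ne 2 0 ltac:(lia) ltac:(lia) isT.
have n12 := ne 2 1 ltac:(lia) ltac:(lia) isT.
rewrite !inE in h0 h1.
case/orP: h0 => /eqP e0; case/orP: h1 => /eqP e1; subst.
all: try by split.
all: by rewrite e1 eqxx in n01.
Qed.

Lemma side_disconnects (U X Y : {set V}) : is_side e U X -> is_side e U Y -> X != Y ->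
  disconnects e U X.
Proof.
move=> sX sY nXY; split.
- by case/andP: sX.
- by apply: disjP' => z; case: (boolP (z \in X)) => //= zX; rewrite (negbTE (side_notin sX zX)).
- have [y yY] : exists y, y \in Y by case/andP: sY => /set0Pn.
  apply/set0Pn; exists y; rewrite !inE negb_or (side_notin sY yY) /=.
  by apply: sides_disj sY sX _ yY; rewrite eq_sym.
- move=> x y xX; rewrite !inE negb_or => /andP[yU yX]; apply/negP => cxy.
  by move: yX; rewrite (sideE sX xX) inE cxy (notin_conn (side_notin sX xX) cxy).
Qed.

Lemma kd (C S Z X : {set V}) : kcut e k Z -> disconnects e Z X -> C = Z -> S = X ->
  kcut e k C /\ disconnects e C S.
Proof. by move=> ? ? -> ->. Qed.

Lemma wheel (U W X0 X1 Y0 Y1 : {set V}) : kcut e k U -> kcut e k W ->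
  is_side e U X0 -> is_side e U X1 -> X0 != X1 -> (forall X, is_side e U X -> X = X0 \/ X = X1) ->
  is_side e W Y0 -> is_side e W Y1 -> Y0 != Y1 -> (forall Y, is_side e W Y -> Y = Y0 \/ Y = Y1) ->
  W :&: X0 != set0 -> W :&: X1 != set0 -> U :&: Y0 != set0 -> U :&: Y1 != set0 ->
  X0 :&: Y0 != set0 -> X0 :&: Y1 != set0 -> X1 :&: Y1 != set0 -> X1 :&: Y0 != set0 ->
  forms_wheel e k 4 (U :&: W) (nth set0 [:: U :&: Y0; W :&: X0; U :&: Y1; W :&: X1])
     (nth set0 [:: X0 :&: Y0; X0 :&: Y1; X1 :&: Y1; X1 :&: Y0]).
Proof.
move=> kU kW s0 s1 n01 hX t0 t1 m01 hY c1 c2 c3 c4 d1 d2 d3 d4.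
have [f1 f2 f3 f4] := two_facts s0 s1 n01 hX.
have [g1 g2 g3 g4] := two_facts t0 t1 m01 hY.
rewrite /forms_wheel; split; first done.
split.
  by move=> i; case: i => [|[|[|[|i]]]] //= _; split.
split.
  move=> i j; case: i => [|[|[|[|i]]]] //; case: j => [|[|[|[|j]]]] // _ _ _ /=;
  by split; apply: disjP' => z; bsolve z.
split.
  move=> i j; case: i => [|[|[|[|i]]]] //; case: j => [|[|[|[|j]]]] // _ _ /=;
  by apply: disjP' => z; bsolve z.
split.
  by move=> i; case: i => [|[|[|[|i]]]] // _ /=; split; apply: disjP' => z; bsolve z.
split.
  rewrite !big_ord_recl big_ord0 /=.
  by apply/setP => z; bsolve z.
move=> i; case: i => [|[|[|[|i]]]] // _.
- rewrite (_ : (0 + 2) %% 4 = 2) // (_ : (0 + 1) %% 4 = 1) //=.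
  apply: (kd (Z := U) (X := X0)) => //; first exact: side_disconnects s0 s1 n01.
  + by apply/setP => z; bsolve z.
  + by apply/setP => z; bsolve z.
- rewrite (_ : (1 + 2) %% 4 = 3) // (_ : (1 + 1) %% 4 = 2) //=.
  apply: (kd (Z := W) (X := Y1)) => //; first by apply: side_disconnects t1 t0 _; rewrite eq_sym.
  + by apply/setP => z; bsolve z.
  + by apply/setP => z; bsolve z.
- rewrite (_ : (2 + 2) %% 4 = 0) // (_ : (2 + 1) %% 4 = 3) //=.
  apply: (kd (Z := U) (X := X1)) => //; first by apply: side_disconnects s1 s0 _; rewrite eq_sym.
  + by apply/setP => z; bsolve z.
  + by apply/setP => z; bsolve z.
- rewrite (_ : (3 + 2) %% 4 = 1) // (_ : (3 + 1) %% 4 = 0) //=.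
  apply: (kd (Z := W) (X := Y0)) => //; first exact: side_disconnects t0 t1 m01.
  + by apply/setP => z; bsolve z.
  + by apply/setP => z; bsolve z.
Qed.

Lemma crossing (U W X1 X2 Y1 Y2 : {set V}) : kcut e k U -> kcut e k W ->
  is_side e U X1 -> is_side e U X2 -> X1 != X2 -> (forall X, is_side e U X -> X = X1 \/ X = X2) ->
  is_side e W Y1 -> is_side e W Y2 -> Y1 != Y2 -> (forall Y, is_side e W Y -> Y = Y1 \/ Y = Y2) ->
  (exists z, z \in W :&: X1) -> (exists z, z \in W :&: X2) ->
  (exists z, z \in U :&: Y1) -> (exists z, z \in U :&: Y2) ->
  (exists z, z \in X1 :&: Y1) -> (exists z, z \in X2 :&: Y2) -> X1 :&: Y2 = set0 ->
  [/\ X1 :&: Y1 != set0, X2 :&: Y2 != set0 & X1 :&: Y2 = set0] /\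
  [/\ #|W :&: X2| = #|U :&: Y1|, 0 < #|U :&: Y1|,
      #|W :&: X1| = #|U :&: Y2| & 0 < #|U :&: Y2|] /\
  crossing_matching_cut e k U X1 (U :&: Y2) W /\
  (X2 :&: Y1 != set0 -> #|U :&: Y2| <= #|U :&: Y1|).
Proof.
move=> kU kW s1 s2 n12 hX t1 t2 m12 hY [w1 w1in] [w2 w2in] [u1 u1in] [u2 u2in]
  [x xin] [y yin] E12.
have [ctU /eqP cU] := andP kU; have [ctW /eqP cW] := andP kW.
have [f1 f2 f3 f4] := two_facts s1 s2 n12 hX.
have [g1 g2 g3 g4] := two_facts t1 t2 m12 hY.
have f5 : forall z, ~~ ((z \in X1) && (z \in Y2)).
  move=> z; apply/negP => h; have : z \in X1 :&: Y2 by rewrite inE.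
  by rewrite E12 inE.
have hx := xin; move: hx => /setIP[xX1 xY1].
have hy := yin; move: hy => /setIP[yX2 yY2].
have yout : y \notin X1 :&: Y1 by rewrite inE (negbTE (sides_disj s2 s1 _ yX2)) // eq_sym.
have xout : x \notin X2 :&: Y2 by rewrite inE (negbTE (sides_disj s1 s2 n12 xX1)).
have h1 := corner_bound mincut s1 t1 xin (corner_out X1 Y1 (side_notin s2 yX2) (side_notin t2 yY2)) yout.
have h2 := corner_bound mincut s2 t2 yin (corner_out X2 Y2 (side_notin s1 xX1) (side_notin t1 xY1)) xout.
have eW : W = (U :&: W) :|: (W :&: X1) :|: (W :&: X2) by apply/setP => z; bsolve z.
have eU : U = (U :&: W) :|: (U :&: Y1) :|: (U :&: Y2) by apply/setP => z; bsolve z.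
have d1 : forall z, z \in (U :&: W) :|: (W :&: X1) -> z \notin W :&: X2 by move=> z; bsolve z.
have d2 : forall z, z \in (U :&: W) -> z \notin W :&: X1 by move=> z; bsolve z.
have d3 : forall z, z \in (U :&: W) :|: (U :&: Y1) -> z \notin U :&: Y2 by move=> z; bsolve z.
have d4 : forall z, z \in (U :&: W) -> z \notin U :&: Y1 by move=> z; bsolve z.
have cW' := cW; rewrite eW (card_disjU d1) (card_disjU d2) in cW'.
have cU' := cU; rewrite eU (card_disjU d3) (card_disjU d4) in cU'.
have p1 : 0 < #|U :&: Y1| by apply/card_gt0P; exists u1.
have p2 : 0 < #|U :&: Y2| by apply/card_gt0P; exists u2.
have q1 : #|W :&: X2| = #|U :&: Y1| by clear -h1 h2 cW' cU'; lia.
have q2 : #|W :&: X1| = #|U :&: Y2| by clear -h1 h2 cW' cU'; lia.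
have EW' : (U :\: (U :&: Y2)) :|: (W :&: X1) = cornerS U W X1 Y1.
  by rewrite /cornerS; apply/setP => z; bsolve z.
split.
  split; [by apply/set0Pn; exists x | by apply/set0Pn; exists y | exact: E12].
split; first by split.
split; last first.
  case/set0Pn => v vin; have hv := vin; move: hv => /setIP[vX2 vY1].
  have vout : x \notin X2 :&: Y1 by rewrite inE (negbTE (sides_disj s1 s2 n12 xX1)).
  have h3 := corner_bound mincut s2 t1 vin (corner_out X2 Y1 (side_notin s1 xX1) (side_notin t1 xY1)) vout.
  by clear -h3 cW' q1 q2; lia.
split.
  split; [ | by rewrite inE | by apply/set0Pn; exists u2 | exact: subsetIl | done].
  - have -> : sides e U = [set X1; X2].
      apply/setP => X; rewrite !inE; apply/idP/idP => [sX | /orP[/eqP-> | /eqP->] //].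
      by case: (hX X sX) => ->; rewrite eqxx ?orbT.
    by rewrite cards2 n12.
exists X2; split.
- by rewrite inE.
- by rewrite eq_sym.
- by apply/set0Pn; exists w2.
split.
- rewrite EW'; apply/andP; split.
    exact: corner_cut s1 t1 xin (corner_out X1 Y1 (side_notin s2 yX2) (side_notin t2 yY2)) yout.
  have := mincut (corner_cut s1 t1 xin (corner_out X1 Y1 (side_notin s2 yX2) (side_notin t2 yY2)) yout).
  rewrite /cornerS; have := cardsUI (W :&: X1 :|: U :&: W) (U :&: Y1).
  have := cardsUI (W :&: X1) (U :&: W).
  move=> a b c; apply/eqP; clear -a b c cW' q1 q2; lia.
- by apply/subsetP => z; bsolve z.
- by apply/subsetP => z; bsolve z.
- by apply/set0Pn; exists x; move: (xX1) (xY1); bsolve x.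
split.
- by apply: disjP' => z; bsolve z.
- by apply: disjP' => z; bsolve z.
move=> u v uin vin; rewrite conn_sym //; apply/negP => cvu.
have vXY : v \in X1 :&: Y1 by move: vin; bsolve v.
rewrite EW' in cvu.
have uXY := conn_closed (fun a b => @corner_closed _ _ U W X1 Y1 a b s1 t1) vXY cvu.
by move: uin uXY; bsolve u.
Qed.

End Final.


Lemma enum2 (V : finType) (e : rel V) (U : {set V}) (A : nat -> {set V}) :
  enum_sides e U 2 A ->
  [/\ is_side e U (A 0), is_side e U (A 1), A 0 != A 1 &
      forall X, is_side e U X -> X = A 0 \/ X = A 1].
Proof.
case=> sd sur inj; split.
- by have := sd 0 isT; rewrite inE.
- by have := sd 1 isT; rewrite inE.
- by apply/negP => /eqP h; have := inj 0 1 isT isT h.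
- move=> X sX; have [i ia Ai] := sur X ltac:(by rewrite inE).
  by case: i ia Ai => [|[|i]] //= _ <-; [left | right].
Qed.

Lemma or_swap (T : Type) (P : T -> Prop) (x y : T) :
  (forall X, P X -> X = x \/ X = y) -> forall X, P X -> X = y \/ X = x.
Proof. by move=> H X PX; case: (H X PX); [right | left]. Qed.

Lemma mem_ex (V : finType) (A : {set V}) (z : V) : z \in A -> exists z, z \in A.
Proof. by exists z. Qed.

Lemma ex_ne (V : finType) (A : {set V}) : (exists z, z \in A) -> A != set0.
Proof. by move/set0Pn. Qed.

Lemma ne0 (V : finType) (A : {set V}) : A != set0 -> exists z, z \in A.
Proof. by move/set0Pn. Qed.

Theorem theorem2 (V : finType) (e : rel V) (k : nat)
    (U W : {set V}) (a b : nat) (A B : nat -> {set V}) :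
  symmetric e -> irreflexive e -> graph_connected e -> non_complete e ->
  vertex_connectivity e k -> 4 * k < #|V| ->
  kcut e k U -> kcut e k W -> W != U ->
  2 <= a -> enum_sides e U a A -> 2 <= b -> enum_sides e W b B ->
  let T := U :&: W in
  (* Laminar type *)
  (laminar_cut e U W /\
   exists i0 j0, [/\ i0 < a, j0 < b,
     B j0 :\: A i0 = (U :\: W) :|: \bigcup_(i < a | val i != i0) A i &
     A i0 :\: B j0 = (W :\: U) :|: \bigcup_(j < b | val j != j0) B j])
  \/
  (* Wheel type *)
  (a = 2 /\ b = 2 /\
   forms_wheel e k 4 T
     (nth set0 [:: U :&: B 0; W :&: A 0; U :&: B 1; W :&: A 1])
     (nth set0 [:: A 0 :&: B 0; A 0 :&: B 1; A 1 :&: B 1; A 1 :&: B 0]))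
  \/
  (* Crossing matching type (after possibly renaming sides) *)
  (a = 2 /\ b = 2 /\
   exists i1 j1, i1 < 2 /\ j1 < 2 /\
     let A1 := A i1 in let A2 := A (1 - i1) in
     let B1 := B j1 in let B2 := B (1 - j1) in
     [/\ A1 :&: B1 != set0, A2 :&: B2 != set0 & A1 :&: B2 = set0] /\
     [/\ #|W :&: A2| = #|U :&: B1|, 0 < #|U :&: B1|,
         #|W :&: A1| = #|U :&: B2| & 0 < #|U :&: B2|] /\
     crossing_matching_cut e k U A1 (U :&: B2) W /\
     (A2 :&: B1 != set0 -> #|U :&: B2| <= #|U :&: B1|))
  \/
  (* Small type *)
  ((exists L, small_with_large e k.-1 U L /\
      forall X, X \in sides e U -> X != L -> X \subset W) \/
   (exists L, small_with_large e k.-1 W L /\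
      forall X, X \in sides e W -> X != L -> X \subset U)).
Proof.
move=> esy _ _ _ [_ mincut] _ kU kW nWU a2 enA b2 enB T.
have [ctU /eqP cU] := andP kU; have [ctW /eqP cW] := andP kW.
case: (boolP [exists X, is_side e U X && (W \subset U :|: X)]) => [/existsP[X /andP[sX sub]] | nlU].
  left; case: (enA) => Asd Asur Ainj.
  have [i0 i0a AX] := Asur X ltac:(by rewrite inE).
  rewrite -AX in sub sX.
  have [j0 j0b [E1 E2]] := lam_core esy mincut cU ctU cW nWU a2 enA enB i0a sub.
  split; first by split => //; exists (A i0) => //; rewrite inE.
  by exists i0, j0.
case: (boolP [exists Y, is_side e W Y && (U \subset W :|: Y)]) => [/existsP[Y /andP[sY sub]] | nlW].
  left; case: (enB) => Bsd Bsur Binj.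
  have [j0 j0b BY] := Bsur Y ltac:(by rewrite inE).
  rewrite -BY in sub sY.
  have nUW : U != W by rewrite eq_sym.
  have [i0 i0a [E1 E2]] := lam_core esy mincut cW ctW cU nUW b2 enB enA j0b sub.
  split.
    split => //; exists (A i0); first by case: enA => Asd _ _; exact: Asd.
    apply/subsetP => z zW; rewrite inE; case: (boolP (z \in U)) => //= zU.
    have : z \in A i0 :\: B j0 by rewrite E1 !inE zU zW.
    by rewrite inE => /andP[].
  by exists i0, j0.
have hX := meets esy mincut cU ctU nlW.
have hY := meets esy mincut cW ctW nlU.
right.
have a0 : 0 < a by apply: leq_trans a2.
have sA0 : is_side e U (A 0).
  by case: enA => Asd _ _; have := Asd 0 a0; rewrite inE.
case: (boolP ((a == 2) && (b == 2))) => [/andP[/eqP ea /eqP eb] | nab]; last first.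
  right; right; apply: (no_opp_small esy cU ctU cW ctW sA0 hX hY).
  move=> X X' Y Y' sX sX' sY sY' nX nY [z1 z1in] z2 z2in.
  have : 2 < a \/ 2 < b.
    move: nab a2 b2; clear; move=> nab a2 b2.
    by move/nandP: nab => [/eqP na | /eqP nb]; [left | right]; lia.
  case=> [a3 | b3].
    have [X'' s'' [m1 m2]] := third enA a3 X X'.
    have HH := opp_third mincut cU cW sX sX' s'' nX m1 m2 sY sY' nY (mem_ex z1in) (mem_ex z2in) (hX _ s''). exact HH.
  have [Y'' t'' [m1 m2]] := third enB b3 Y Y'.
  have z1' : z1 \in Y :&: X by rewrite setIC.
  have z2' : z2 \in Y' :&: X' by rewrite setIC.
  have HH := opp_third mincut cW cU sY sY' t'' nY m1 m2 sX sX' nX (mem_ex z1') (mem_ex z2') (hY _ t''). exact HH.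
subst a b.
have [sA0' sA1 nA hA] := enum2 enA; have [sB0 sB1 nB hB] := enum2 enB.
have nA' : A 1 != A 0 by rewrite eq_sym.
have nB' : B 1 != B 0 by rewrite eq_sym.
have hA' := or_swap hA; have hB' := or_swap hB.
case: (boolP [&& A 0 :&: B 0 != set0, A 0 :&: B 1 != set0, A 1 :&: B 1 != set0 & A 1 :&: B 0 != set0])
  => [/and4P[c00 c01 c11 c10] | nall].
  left; split => //; split => //.
  have HH := wheel esy kU kW sA0 sA1 nA hA sB0 sB1 nB hB (ex_ne (hX _ sA0)) (ex_ne (hX _ sA1))
    (ex_ne (hY _ sB0)) (ex_ne (hY _ sB1)) c00 c01 c11 c10.
  exact HH.
right.
case: (boolP [&& A 0 :&: B 0 != set0, A 1 :&: B 1 != set0 & A 0 :&: B 1 == set0])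
  => [/and3P[p q /eqP r] | n1].
  left; split => //; split => //; exists 0, 0; split => //; split => //.
  have HH := crossing esy mincut kU kW sA0 sA1 nA hA sB0 sB1 nB hB (hX _ sA0) (hX _ sA1)
    (hY _ sB0) (hY _ sB1) (ne0 p) (ne0 q) r. exact HH.
case: (boolP [&& A 1 :&: B 1 != set0, A 0 :&: B 0 != set0 & A 1 :&: B 0 == set0])
  => [/and3P[p q /eqP r] | n2].
  left; split => //; split => //; exists 1, 1; split => //; split => //.
  have HH := crossing esy mincut kU kW sA1 sA0 nA' hA' sB1 sB0 nB' hB' (hX _ sA1) (hX _ sA0)
    (hY _ sB1) (hY _ sB0) (ne0 p) (ne0 q) r. exact HH.
case: (boolP [&& A 0 :&: B 1 != set0, A 1 :&: B 0 != set0 & A 0 :&: B 0 == set0])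
  => [/and3P[p q /eqP r] | n3].
  left; split => //; split => //; exists 0, 1; split => //; split => //.
  have HH := crossing esy mincut kU kW sA0 sA1 nA hA sB1 sB0 nB' hB' (hX _ sA0) (hX _ sA1)
    (hY _ sB1) (hY _ sB0) (ne0 p) (ne0 q) r. exact HH.
case: (boolP [&& A 1 :&: B 0 != set0, A 0 :&: B 1 != set0 & A 1 :&: B 1 == set0])
  => [/and3P[p q /eqP r] | n4].
  left; split => //; split => //; exists 1, 0; split => //; split => //.
  have HH := crossing esy mincut kU kW sA1 sA0 nA' hA' sB0 sB1 nB hB (hX _ sA1) (hX _ sA0)
    (hY _ sB0) (hY _ sB1) (ne0 p) (ne0 q) r. exact HH.
right; apply: (no_opp_small esy cU ctU cW ctW sA0 hX hY).
move=> X X' Y Y' sX sX' sY sY' nX nY [z1 z1in] z2 z2in.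
have h1 : X :&: Y != set0 by apply/set0Pn; exists z1.
have h2 : X' :&: Y' != set0 by apply/set0Pn; exists z2.
case: (hA X sX) => ?; case: (hA X' sX') => ?; case: (hB Y sY) => ?; case: (hB Y' sY') => ?;
  subst.
all: try by rewrite eqxx in nX.
all: try by rewrite eqxx in nY.
all: move: nall n1 n2 n3 n4 h1 h2; case: (A 0 :&: B 0 == set0); case: (A 0 :&: B 1 == set0);
  case: (A 1 :&: B 0 == set0); case: (A 1 :&: B 1 == set0); by [].
Qed.
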